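(* There is an absolute constant $C>0$ such that the following holds. Let $p$ be a prime and $n:=p^3$. Let $s_0,\dots,s_{n-1}\in[0,1)$ be such that $Q_{0,3}(x)=\sum_{j=0}^{n-1}e^{2\pi\imath s_j}x^j$. Then for every $t\in\mathbb{R}$, $$B(s_0,\,s_1+t,\,s_2+2t,\dots,s_{n-1}+(n-1)t)\ \le\ C\,n^{2/3}\log n.$$
   Context: Fix a prime $p$ and a primitive $p$-th root of unity $\xi$. Let $D$ be the $p\times p$ matrix $D_{j,l}=\xi^{jl}$, $j,l\in\{0,\dots,p-1\}$. Define polynomials $Q_{0,r},\dots,Q_{p-1,r}\in\mathbb{C}[x]$ recursively: $Q_{j,0}:=1$ for all $j$, and for $r\ge0$, $$(Q_{0,r+1},\dots,Q_{p-1,r+1})^T:=D\cdot\big(Q_{0,r},\,x^{p^r}Q_{1,r},\dots,x^{(p-1)p^r}Q_{p-1,r}\big)^T.$$ $Q_{0,3}$ has degree $p^3-1$ and all coefficients of absolute value $1$. For $r\in\mathbb{R}$, $\{r\}:=r-\lfloor r\rfloor$; the bias of $r_1,\dots,r_N$ is $B(r_1,\dots,r_N):=\sup_{0\le a\le b\le1}\big|\,|\{i:\{r_i\}\in[a,b]\}|-N(b-a)\big|$. *)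

(* Defs.v *)
From Stdlib Require Import Reals Lra Lia ZArith Arith List Znumtheory.
Open Scope R_scope.

Definition cpx : Type := (R * R)%type.
Definition c0 : cpx := (0, 0).
Definition c1 : cpx := (1, 0).
Definition cadd (z w : cpx) : cpx := (fst z + fst w, snd z + snd w).
Definition cmul (z w : cpx) : cpx :=
  (fst z * fst w - snd z * snd w, fst z * snd w + snd z * fst w).
Fixpoint cpow (z : cpx) (k : nat) : cpx :=
  match k with O => c1 | S k' => cmul z (cpow z k') end.
Fixpoint csum (n : nat) (f : nat -> cpx) : cpx :=
  match n with O => c0 | S n' => cadd (csum n' f) (f n') end.

Definition cexp2pi (s : R) : cpx := (cos (2 * PI * s), sin (2 * PI * s)).

Definition primitive_root (p : nat) (xi : cpx) : Prop :=
  cpow xi p = c1 /\ (forall k : nat, (0 < k < p)%nat -> cpow xi k <> c1).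

(* Qcoef p xi r j m = coefficient of x^m in Q_{j,r}, where
   Q_{j,0} = 1 and Q_{j,r+1}(x) = sum_{l<p} xi^{j l} x^{l p^r} Q_{l,r}(x),
   i.e. (Q_{.,r+1}) = D . (Q_{0,r}, x^{p^r} Q_{1,r}, ..., x^{(p-1)p^r} Q_{p-1,r}). *)
Fixpoint Qcoef (p : nat) (xi : cpx) (r : nat) (j : nat) (m : nat) : cpx :=
  match r with
  | O => if Nat.eqb m 0 then c1 else c0
  | S r' =>
      csum p (fun l =>
        cmul (cpow xi (j * l))
             (if Nat.leb (l * p ^ r') m then Qcoef p xi r' l (m - l * p ^ r') else c0))
  end.

Definition fracR (x : R) : R := x - IZR (Int_part x).

Definition count_in (r : nat -> R) (N : nat) (a b : R) : nat :=
  length (filter (fun i => if Rle_dec a (fracR (r i)) then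
                             if Rle_dec (fracR (r i)) b then true else false
                           else false) (seq 0 N)).

(* B(r_0,...,r_{N-1}) <= X, i.e. the supremum defining the bias is at most X:
   every element of the set being sup'ed is <= X. *)
Definition bias_le (r : nat -> R) (N : nat) (X : R) : Prop :=
  forall a b : R, 0 <= a -> a <= b -> b <= 1 ->
    Rabs (INR (count_in r N a b) - INR N * (b - a)) <= X.

(* Main.v *)
Require Import Defs.
From Stdlib Require Import Reals Lra Lia ZArith Znumtheory List.
From Coquelicot Require Import Coquelicot.
Open Scope R_scope.

Fixpoint sC (n : nat) (f : nat -> C) : C :=
  match n with O => RtoC 0 | S k => Cplus (sC k f) (f k) end.
Fixpoint sR (n : nat) (f : nat -> R) : R :=
  match n with O => 0 | S k => sR k f + f k end.

Lemma sC_ext n f g : (forall i, (i < n)%nat -> f i = g i) -> sC n f = sC n g.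
Proof. induction n; simpl; intros H; auto. rewrite IHn by (intros; apply H; lia). rewrite H by lia. auto. Qed.
Lemma sR_ext n f g : (forall i, (i < n)%nat -> f i = g i) -> sR n f = sR n g.
Proof. induction n; simpl; intros H; auto. rewrite IHn by (intros; apply H; lia). rewrite H by lia. auto. Qed.
Lemma sC_plus n f g : sC n (fun i => f i + g i)%C = (sC n f + sC n g)%C.
Proof. induction n; simpl. - apply injective_projections; simpl; lra. - rewrite IHn. ring. Qed.
Lemma sR_plus n f g : sR n (fun i => f i + g i) = sR n f + sR n g.
Proof. induction n; simpl. lra. rewrite IHn. ring. Qed.
Lemma sC_scal n c f : (c * sC n f)%C = sC n (fun i => c * f i)%C.
Proof. induction n; simpl. - apply injective_projections; simpl; lra. - rewrite <- IHn. ring. Qed.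
Lemma sR_scal n c f : c * sR n f = sR n (fun i => c * f i).
Proof. induction n; simpl. lra. rewrite <- IHn. ring. Qed.
Lemma sC_zero n f : (forall i, (i < n)%nat -> f i = RtoC 0) -> sC n f = RtoC 0.
Proof. induction n; simpl; intros H; auto. rewrite IHn, H by (intros; try apply H; lia). apply injective_projections; simpl; lra. Qed.
Lemma sR_zero n f : (forall i, (i < n)%nat -> f i = 0) -> sR n f = 0.
Proof. induction n; simpl; intros H; auto. rewrite IHn, H by (intros; try apply H; lia). lra. Qed.
Lemma sC_swap n m (f : nat -> nat -> C) :
  sC n (fun i => sC m (f i)) = sC m (fun j => sC n (fun i => f i j)).
Proof.
  induction n; simpl.
  - symmetry; apply sC_zero; auto.
  - rewrite IHn, <- sC_plus. auto.
Qed.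
Lemma sR_swap n m (f : nat -> nat -> R) :
  sR n (fun i => sR m (f i)) = sR m (fun j => sR n (fun i => f i j)).
Proof.
  induction n; simpl.
  - symmetry; apply sR_zero; auto.
  - rewrite IHn, <- sR_plus. auto.
Qed.
Lemma sC_app n m f : sC (n + m) f = (sC n f + sC m (fun k => f (n + k)%nat))%C.
Proof.
  induction m; simpl.
  - rewrite Nat.add_0_r. apply injective_projections; simpl; lra.
  - rewrite Nat.add_succ_r. simpl. rewrite IHm. ring.
Qed.
Lemma sR_app n m f : sR (n + m) f = sR n f + sR m (fun k => f (n + k)%nat).
Proof.
  induction m; simpl.
  - rewrite Nat.add_0_r. lra.
  - rewrite Nat.add_succ_r. simpl. rewrite IHm. ring.
Qed.
Lemma sC_split p m f : sC (p * m) f = sC m (fun q => sC p (fun r => f (r + p * q)%nat)).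
Proof.
  induction m; simpl.
  - rewrite Nat.mul_0_r. auto.
  - rewrite Nat.mul_succ_r, sC_app, IHm. f_equal. apply sC_ext. intros. f_equal. lia.
Qed.
Lemma sR_split p m f : sR (p * m) f = sR m (fun q => sR p (fun r => f (r + p * q)%nat)).
Proof.
  induction m; simpl.
  - rewrite Nat.mul_0_r. auto.
  - rewrite Nat.mul_succ_r, sR_app, IHm. f_equal. apply sR_ext. intros. f_equal. lia.
Qed.
Lemma Cmod_sC n f : Cmod (sC n f) <= sR n (fun i => Cmod (f i)).
Proof.
  induction n; simpl.
  - rewrite Cmod_0. lra.
  - eapply Rle_trans. apply Cmod_triangle. lra.
Qed.
Lemma sC_RtoC n f : sC n (fun i => RtoC (f i)) = RtoC (sR n f).
Proof.
  induction n; simpl; auto. rewrite IHn. apply injective_projections; simpl; lra.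
Qed.
Lemma sR_le n f g : (forall i, (i < n)%nat -> f i <= g i) -> sR n f <= sR n g.
Proof. induction n; simpl; intros H. lra. specialize (IHn (fun i Hi => H i ltac:(lia))). specialize (H n ltac:(lia)). lra. Qed.
Lemma sR_const n c : sR n (fun _ => c) = INR n * c.
Proof. induction n; simpl sR. simpl; lra. rewrite IHn, S_INR. ring. Qed.
Lemma sR_nonneg n f : (forall i, (i < n)%nat -> 0 <= f i) -> 0 <= sR n f.
Proof. induction n; simpl; intros H. lra. specialize (IHn (fun i Hi => H i ltac:(lia))). specialize (H n ltac:(lia)). lra. Qed.
Lemma sC_mult n m f g : (sC n f * sC m g)%C = sC n (fun i => sC m (fun j => f i * g j))%C.
Proof.
  rewrite Cmult_comm, sC_scal. apply sC_ext; intros. rewrite Cmult_comm, sC_scal. auto.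
Qed.
Lemma sC_conj n f : Cconj (sC n f) = sC n (fun i => Cconj (f i)).
Proof. induction n; simpl. apply injective_projections; simpl; lra.
  rewrite <- IHn. apply injective_projections; simpl; lra. Qed.

Definition e (x : R) : C := (cos (2 * PI * x), sin (2 * PI * x)).

Lemma e_add x y : e (x + y) = (e x * e y)%C.
Proof.
  unfold e, Cmult; simpl. replace (2 * PI * (x + y)) with (2*PI*x + 2*PI*y) by ring.
  rewrite cos_plus, sin_plus. f_equal; ring.
Qed.
Lemma e_0 : e 0 = RtoC 1.
Proof. unfold e. rewrite Rmult_0_r, cos_0, sin_0. auto. Qed.
Lemma e_1 : e 1 = RtoC 1.
Proof. unfold e. rewrite Rmult_1_r, cos_2PI, sin_2PI. auto. Qed.
Lemma e_INR n : e (INR n) = RtoC 1.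
Proof. induction n. simpl. apply e_0. rewrite S_INR, e_add, IHn, e_1. ring. Qed.
Lemma e_opp x : e (- x) = Cconj (e x).
Proof. unfold e, Cconj; simpl. replace (2*PI*-x) with (-(2*PI*x)) by ring.
  rewrite cos_neg, sin_neg. auto. Qed.
Lemma Cmod_e x : Cmod (e x) = 1.
Proof. unfold Cmod, e; cbn [fst snd].
  pose proof (sin2_cos2 (2*PI*x)). unfold Rsqr in H.
  replace (cos (2 * PI * x) ^ 2 + sin (2 * PI * x) ^ 2) with 1 by (simpl; lra). apply sqrt_1. Qed.
Lemma e_mul_conj x : (e x * Cconj (e x))%C = RtoC 1.
Proof. rewrite <- e_opp, <- e_add. replace (x + - x) with 0 by ring. apply e_0. Qed.
Lemma e_IZR z : e (IZR z) = RtoC 1.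
Proof.
  destruct (Z_le_gt_dec 0 z).
  - rewrite <- (Z2Nat.id z) by lia. rewrite <- INR_IZR_INZ. apply e_INR.
  - replace z with (- Z.of_nat (Z.to_nat (- z)))%Z by lia.
    rewrite opp_IZR, <- INR_IZR_INZ, e_opp, e_INR. apply injective_projections; simpl; lra.
Qed.
Lemma e_pow x n : Cpow (e x) n = e (INR n * x).
Proof.
  induction n. simpl. rewrite Rmult_0_l, e_0. auto.
  rewrite Cpow_S, IHn, <- e_add, S_INR. f_equal. ring.
Qed.
Lemma frac_in r : 0 <= r - IZR (Int_part r) < 1.
Proof. destruct (base_Int_part r). lra. Qed.

Lemma cos_lt1 f : 0 < f < 1 -> cos (2 * PI * f) < 1.
Proof.
  intros Hf. replace (2*PI*f) with (2*(PI*f)) by ring. rewrite cos_2a_sin.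
  assert (0 < sin (PI * f)). { apply sin_gt_0. pose proof PI_RGT_0. nra.
    pose proof PI_RGT_0. nra. }
  nra.
Qed.
Lemma e_eq1 x : e x = RtoC 1 -> exists z, x = IZR z.
Proof.
  intros H. exists (Int_part x).
  pose proof (frac_in x) as Hf. set (f := x - IZR (Int_part x)) in *.
  assert (Hef : e f = RtoC 1).
  { unfold f. unfold Rminus. rewrite e_add, e_opp, e_IZR, H. apply injective_projections; simpl; lra. }
  destruct (Req_dec f 0). unfold f in *; lra.
  assert (cos (2*PI*f) < 1) by (apply cos_lt1; lra).
  unfold e in Hef. injection Hef; intros. lra.
Qed.
Lemma Cmod_e_sub1 x : Cmod (e x - 1) = 2 * Rabs (sin (PI * x)).
Proof.
  unfold Cmod, e, Cminus, Cplus, Copp, RtoC; cbn [fst snd].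
  replace ((cos (2*PI*x) + - (1)) ^ 2 + (sin (2*PI*x) + - 0) ^ 2) with (2 - 2 * cos (2 * (PI * x))).
  2:{ replace (2*(PI*x)) with (2*PI*x) by ring. pose proof (sin2_cos2 (2*PI*x)). unfold Rsqr in H. simpl. nra. }
  rewrite cos_2a_sin.
  replace (2 - 2 * (1 - 2 * sin (PI * x) * sin (PI * x))) with (Rsqr (2 * Rabs (sin (PI*x)))).
  apply sqrt_Rsqr. pose proof (Rabs_pos (sin (PI*x))). lra.
  set (s := sin (PI * x)). unfold Rsqr.
  replace (2 * Rabs s * (2 * Rabs s)) with (4 * (Rabs s * Rabs s)) by ring.
  rewrite <- Rabs_mult, Rabs_right by nra. ring.
Qed.

Lemma Cmult_eq0 (a b : C) : (a * b)%C = RtoC 0 -> a <> RtoC 0 -> b = RtoC 0.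
Proof.
  intros H Ha. replace b with (/ a * (a * b))%C by (field; auto). rewrite H. ring.
Qed.

Lemma geom (w : C) n : ((w - 1) * sC n (fun u => Cpow w u))%C = (Cpow w n - 1)%C.
Proof.
  induction n; simpl sC.
  - simpl. ring.
  - rewrite Cmult_plus_distr_l, IHn, Cpow_S. ring.
Qed.

Lemma sC_one n : sC n (fun _ => RtoC 1) = RtoC (INR n).
Proof. rewrite sC_RtoC, sR_const. f_equal; ring. Qed.

Lemma INR_pos n : (0 < n)%nat -> 0 < INR n.
Proof. apply lt_0_INR. Qed.

Lemma sum_e_int (n : nat) (m : Z) : (0 < n)%nat ->
  sC n (fun u => e (INR u * IZR m / INR n)) =
  if (m mod Z.of_nat n =? 0)%Z then RtoC (INR n) else RtoC 0.
Proof.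
  intros Hn. pose proof (INR_pos n Hn) as Hn'.
  set (w := e (IZR m / INR n)).
  assert (Hw : forall u, e (INR u * IZR m / INR n) = Cpow w u).
  { intros u. unfold w. rewrite e_pow. f_equal. field. lra. }
  rewrite (sC_ext _ _ _ (fun u _ => Hw u)).
  destruct (Z.eqb_spec (m mod Z.of_nat n) 0) as [Hd|Hd].
  - assert (w = RtoC 1).
    { unfold w. apply Z.mod_divide in Hd; [|lia]. destruct Hd as [q Hq].
      rewrite Hq, mult_IZR, <- INR_IZR_INZ.
      replace (IZR q * INR n / INR n) with (IZR q) by (field; lra). apply e_IZR. }
    rewrite H. rewrite (sC_ext _ _ (fun _ => RtoC 1)). apply sC_one.
    intros. apply Cpow_1_l.
  - apply (Cmult_eq0 (w - 1)).
    + rewrite geom. unfold w. rewrite e_pow.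
      replace (INR n * (IZR m / INR n)) with (IZR m) by (field; lra).
      rewrite e_IZR. ring.
    + intros Hw1. assert (e (IZR m / INR n) = RtoC 1).
      { fold w. replace w with ((w - 1) + 1)%C by ring. rewrite Hw1. ring. }
      apply e_eq1 in H. destruct H as [z Hz].
      apply Hd. apply Z.mod_divide; [lia|]. exists z.
      apply eq_IZR. rewrite mult_IZR, <- INR_IZR_INZ.
      apply (Rmult_eq_reg_r (/ INR n)). rewrite <- Hz. field. lra.
      apply Rinv_neq_0_compat; lra.
Qed.

Lemma geom_e_bound K phi x : e x <> RtoC 1 ->
  Cmod (sC K (fun k => e (phi + INR k * x))) <= 2 / Cmod (e x - 1).
Proof.
  intros Hx.
  assert (Hnz : Cmod (e x - 1) > 0).
  { apply Cmod_gt_0. intros H. apply Hx. replace (e x) with ((e x - 1) + 1)%C by ring. rewrite H. ring. }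
  rewrite (sC_ext _ _ (fun k => e phi * Cpow (e x) k)%C).
  2:{ intros. rewrite e_pow, e_add. auto. }
  rewrite <- sC_scal, Cmod_mult, Cmod_e, Rmult_1_l.
  apply (Rmult_le_reg_l (Cmod (e x - 1))); auto.
  rewrite <- Cmod_mult, geom. replace (Cmod (e x - 1) * (2 / Cmod (e x - 1))) with 2 by (field; lra).
  eapply Rle_trans. apply Cmod_triangle. rewrite e_pow, Cmod_e, Cmod_opp, Cmod_1. lra.
Qed.

Lemma sin_lin y : 0 <= y <= PI / 2 -> y / 3 <= sin y.
Proof.
  intros Hy. pose proof PI_4. pose proof PI2_1.
  destruct (sin_bound y 0 ltac:(lra) ltac:(lra)) as [Hb _].
  unfold sin_approx in Hb. simpl in Hb. unfold sin_term in Hb. simpl in Hb.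
  assert (y * y <= 4) by nra. nra.
Qed.

Lemma sin_pix x : 0 <= x <= 1 -> 2/3 * Rmin x (1 - x) <= sin (PI * x).
Proof.
  intros Hx. pose proof PI2_1. pose proof PI_RGT_0.
  destruct (Rle_dec x (1/2)).
  - rewrite Rmin_left by lra. pose proof (sin_lin (PI*x) ltac:(nra)). nra.
  - rewrite Rmin_right by lra. replace (PI * x) with (PI - PI * (1 - x)) by ring.
    rewrite sin_PI_x. pose proof (sin_lin (PI*(1-x)) ltac:(nra)). nra.
Qed.

Lemma div_le1 x y : 0 < y -> x <= y -> x / y <= 1.
Proof. intros. apply (Rmult_le_reg_r y); auto. unfold Rdiv. rewrite Rmult_assoc, Rinv_l; lra. Qed.
Lemma div_lt1 x y : 0 < y -> x < y -> x / y < 1.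
Proof. intros. apply (Rmult_lt_reg_r y); auto. unfold Rdiv. rewrite Rmult_assoc, Rinv_l; lra. Qed.

Lemma W_bound K (c : Z) (h M : nat) : (0 < h < M)%nat ->
  Cmod (sC K (fun k => e (- (INR h) * (IZR c + INR k) / INR M)))
  <= 3/2 * INR M * (1 / INR h + 1 / INR (M - h)).
Proof.
  intros Hh.
  assert (HM : 0 < INR M) by (apply lt_0_INR; lia).
  assert (Hh0 : 0 < INR h) by (apply lt_0_INR; lia).
  assert (HMh : INR (M - h) = INR M - INR h) by (apply minus_INR; lia).
  assert (Hh1 : INR h < INR M) by (apply lt_INR; lia).
  set (x := - INR h / INR M).
  assert (Hs : 2/3 * Rmin (INR h / INR M) (1 - INR h / INR M) <= sin (PI * (INR h / INR M))).
  { apply sin_pix. split. apply Rdiv_le_0_compat; lra.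
    apply div_le1; lra. }
  assert (Hmin : 0 < Rmin (INR h / INR M) (1 - INR h / INR M)).
  { apply Rmin_glb_lt. apply Rdiv_lt_0_compat; lra.
    assert (INR h / INR M < 1) by (apply div_lt1; lra). lra. }
  assert (Hex : Cmod (e x - 1) = 2 * sin (PI * (INR h / INR M))).
  { rewrite Cmod_e_sub1. unfold x. replace (PI * (- INR h / INR M)) with (- (PI * (INR h / INR M))) by (field; lra).
    rewrite sin_neg, Rabs_Ropp, Rabs_right. auto. lra. }
  assert (Hx : e x <> RtoC 1).
  { intros H. assert (Cmod (e x - 1) = 0). rewrite H. replace (RtoC 1 - 1)%C with (RtoC 0) by ring. apply Cmod_0. lra. }
  rewrite (sC_ext _ _ (fun k => e (- INR h * IZR c / INR M + INR k * x))).
  2:{ intros. f_equal. unfold x. field. lra. }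
  eapply Rle_trans. apply geom_e_bound; auto. rewrite Hex.
  replace (2 / (2 * sin (PI * (INR h / INR M)))) with (1 / sin (PI * (INR h / INR M))) by (field; lra).
  apply (Rle_trans _ (1 / (2/3 * Rmin (INR h / INR M) (1 - INR h / INR M)))).
  { apply Rmult_le_compat_l. lra. apply Rinv_le_contravar; lra. }
  rewrite HMh. unfold Rmin. destruct (Rle_dec (INR h / INR M) (1 - INR h / INR M)).
  - assert (0 < 1 / (INR M - INR h)) by (apply Rdiv_lt_0_compat; lra).
    replace (1 / (2 / 3 * (INR h / INR M))) with (3/2 * INR M * (1 / INR h)) by (field; lra). nra.
  - assert (0 < 1 / INR h) by (apply Rdiv_lt_0_compat; lra).
    replace (1 / (2 / 3 * (1 - INR h / INR M))) with (3/2 * INR M * (1 / (INR M - INR h))) by (field; lra). nra.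
Qed.

Definition Harm m := sR m (fun i => 1 / INR (S i)).
Lemma ln_le_xm1 x : 0 < x -> ln x <= x - 1.
Proof. intros Hx. pose proof (exp_ineq1_le (ln x)). rewrite exp_ln in H; lra. Qed.
Lemma Harm_bound m : (1 <= m)%nat -> Harm m <= 1 + ln (INR m).
Proof.
  induction m; intros Hm. lia.
  destruct (Nat.eq_dec m 0). subst. unfold Harm. simpl. rewrite ln_1. lra.
  unfold Harm in *. change (sR (S m) (fun i => 1/INR (S i))) with (sR m (fun i => 1/INR(S i)) + 1/INR (S m)).
  specialize (IHm ltac:(lia)).
  assert (0 < INR m) by (apply lt_0_INR; lia).
  rewrite S_INR.
  assert (1 / (INR m + 1) <= ln (INR m + 1) - ln (INR m)).
  { pose proof (ln_le_xm1 (INR m / (INR m + 1)) ltac:(apply Rdiv_lt_0_compat; lra)).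
    rewrite ln_div in H0 by lra.
    replace (INR m / (INR m + 1) - 1) with (- (1 / (INR m + 1))) in H0 by (field; lra). lra. }
  lra.
Qed.
Lemma sR_rev n f : sR n (fun i => f (n - 1 - i)%nat) = sR n f.
Proof.
  revert f. induction n; intros f. auto.
  change (sR (S n) (fun i => f (S n - 1 - i)%nat)) with
    (sR n (fun i => f (S n - 1 - i)%nat) + f (S n - 1 - n)%nat).
  change (sR (S n) f) with (sR (1 + n) f). rewrite sR_app.
  rewrite <- (IHn (fun j => f (1 + j)%nat)). simpl sR at 3.
  replace (S n - 1 - n)%nat with 0%nat by lia.
  change (sR 1 f) with (0 + f 0%nat). rewrite Rplus_0_l, Rplus_comm. f_equal.
  apply sR_ext. intros. f_equal. lia.
Qed.

Lemma sC_delta n l (f : nat -> C) : (l < n)%nat ->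
  sC n (fun j => if Nat.eqb l j then f j else RtoC 0) = f l.
Proof.
  induction n; intros Hl. lia. simpl sC.
  destruct (Nat.eq_dec l n).
  - subst. rewrite Nat.eqb_refl. rewrite sC_zero. ring.
    intros. destruct (Nat.eqb_spec n i); auto. lia.
  - rewrite IHn by lia. destruct (Nat.eqb_spec l n). lia. ring.
Qed.

Lemma Cmod2 (c : C) : RtoC (Cmod c ^ 2) = (c * Cconj c)%C.
Proof. rewrite <- Cmod2_conj. rewrite RtoC_pow. auto. Qed.

Lemma prime_ge2 p : prime (Z.of_nat p) -> (2 <= p)%nat.
Proof. intros H. destruct H. lia. Qed.

Lemma sq_sum_e (p : nat) (d : Z) (phi : R) :
  prime (Z.of_nat p) -> ~ (Z.of_nat p | d)%Z ->
  sR p (fun u => Cmod (sC p (fun l => e (INR l * (IZR d * INR u / INR p + phi)))) ^ 2)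
  = INR p ^ 2.
Proof.
  intros Hp Hd. pose proof (prime_ge2 p Hp) as Hp2.
  assert (HpR : 0 < INR p) by (apply lt_0_INR; lia).
  apply RtoC_inj. rewrite <- sC_RtoC.
  rewrite (sC_ext _ _ (fun u => sC p (fun l => sC p (fun l' =>
      e ((INR l - INR l') * phi) * e (INR u * IZR (d * (Z.of_nat l - Z.of_nat l')) / INR p))))%C).
  2:{ intros u Hu. rewrite Cmod2, sC_conj, sC_mult. apply sC_ext; intros l Hl. apply sC_ext; intros l' Hl'.
      rewrite <- e_opp, <- !e_add. f_equal. rewrite mult_IZR, minus_IZR, <- !INR_IZR_INZ. field. lra. }
  rewrite sC_swap. rewrite (sC_ext _ _ (fun l => RtoC (INR p))).
  - rewrite sC_RtoC, sR_const. apply injective_projections; simpl; ring.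
  - intros l Hl. rewrite sC_swap.
    rewrite (sC_ext _ _ (fun l' => if Nat.eqb l l' then RtoC (INR p) else RtoC 0)).
    + apply (sC_delta p l (fun _ => RtoC (INR p))); auto.
    + intros l' Hl'. rewrite <- sC_scal. rewrite sum_e_int by lia.
      destruct (Nat.eqb_spec l l').
      * subst. rewrite Z.sub_diag, Z.mul_0_r, Zmod_0_l. simpl.
        rewrite Rminus_diag, Rmult_0_l, e_0. ring.
      * replace ((d * (Z.of_nat l - Z.of_nat l')) mod Z.of_nat p =? 0)%Z with false. ring.
        symmetry. apply Z.eqb_neq. intros Hm. apply Z.mod_divide in Hm; [|lia].
        apply prime_mult in Hm; auto. destruct Hm as [Hm|Hm]. auto.
        destruct Hm as [k Hk]. assert (Z.of_nat l < Z.of_nat p)%Z by lia. assert (Z.of_nat l' < Z.of_nat p)%Z by lia. assert (Z.of_nat l <> Z.of_nat l') by lia. destruct (Z_le_gt_dec k 0); destruct (Z_le_gt_dec k (-1)); nia.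
Qed.

Lemma S_bound3 (p : nat) (alpha h : Z) (tau : R) :
  prime (Z.of_nat p) -> ~ (Z.of_nat p | alpha)%Z -> ~ (Z.of_nat p | h)%Z ->
  Cmod (sC p (fun l2 => sC p (fun l1 => sC p (fun l0 =>
     e (IZR h * (IZR alpha * INR l1 * INR (l0 + l2) / INR p + INR (l0 + p * (l1 + p * l2)) * tau))))))
  <= INR p ^ 2.
Proof.
  intros Hp Ha Hh. pose proof (prime_ge2 p Hp) as Hp2.
  assert (HpR : 0 < INR p) by (apply lt_0_INR; lia).
  assert (Hd : ~ (Z.of_nat p | h * alpha)%Z).
  { intros H. apply prime_mult in H; auto. tauto. }
  rewrite sC_swap.
  rewrite (sC_ext _ _ (fun l1 => e (IZR h * INR p * INR l1 * tau) *
     (sC p (fun l0 => e (INR l0 * (IZR (h * alpha) * INR l1 / INR p + IZR h * tau))) *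
      sC p (fun l2 => e (INR l2 * (IZR (h * alpha) * INR l1 / INR p + IZR h * (INR p * INR p) * tau)))))%C).
  2:{ intros l1 Hl1. rewrite sC_mult, sC_scal. rewrite sC_swap. apply sC_ext; intros l2 Hl2.
      rewrite sC_scal. apply sC_ext; intros l0 Hl0.
      rewrite <- !e_add. f_equal. rewrite mult_IZR; repeat rewrite ?plus_INR, ?mult_INR. field. lra. }
  eapply Rle_trans. apply Cmod_sC.
  set (A := fun l1 => Cmod (sC p (fun l0 => e (INR l0 * (IZR (h * alpha) * INR l1 / INR p + IZR h * tau))))).
  set (B := fun l1 => Cmod (sC p (fun l2 => e (INR l2 * (IZR (h * alpha) * INR l1 / INR p + IZR h * (INR p * INR p) * tau))))).
  apply (Rle_trans _ (sR p (fun u => (A u ^ 2 + B u ^ 2) / 2))).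
  - apply sR_le. intros u Hu. rewrite !Cmod_mult, Cmod_e. fold (A u) (B u).
    pose proof (Cmod_ge_0 (sC p (fun l0 => e (INR l0 * (IZR (h * alpha) * INR u / INR p + IZR h * tau))))).
    assert (0 <= (A u - B u) ^ 2) by apply pow2_ge_0. nra.
  - rewrite <- (sR_ext _ (fun u => / 2 * (A u ^ 2) + / 2 * (B u ^ 2))) by (intros; field).
    rewrite sR_plus, <- !sR_scal. unfold A, B. rewrite !sq_sum_e; auto. lra.
Qed.

Definition indm (M : nat) (m : Z) : R := if (m mod Z.of_nat M =? 0)%Z then 1 else 0.

Lemma ind_01 M m : 0 <= indm M m <= 1.
Proof. unfold indm. destruct (_ =? _)%Z; lra. Qed.

Lemma ind_fourier (M : nat) (m : Z) : (0 < M)%nat ->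
  RtoC (INR M * indm M m) = sC M (fun h => e (INR h * IZR m / INR M)).
Proof.
  intros HM. rewrite sum_e_int by auto. unfold indm.
  destruct (_ =? _)%Z; f_equal; ring.
Qed.

Lemma sR_term_le n f k : (forall i, (i < n)%nat -> 0 <= f i) -> (k < n)%nat -> f k <= sR n f.
Proof.
  induction n; intros H Hk. lia. simpl.
  assert (0 <= sR n f) by (apply sR_nonneg; intros; apply H; lia).
  destruct (Nat.eq_dec k n). subst. lra.
  specialize (IHn (fun i Hi => H i ltac:(lia)) ltac:(lia)). specialize (H n ltac:(lia)). lra.
Qed.

Lemma sR_atmost1 K (P : nat -> bool) :
  (forall k1 k2, (k1 < K)%nat -> (k2 < K)%nat -> P k1 = true -> P k2 = true -> k1 = k2) ->
  sR K (fun k => if P k then 1 else 0) <= 1.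
Proof.
  induction K; intros H; simpl. lra.
  destruct (P K) eqn:E.
  - rewrite sR_zero. lra. intros i Hi. destruct (P i) eqn:Ei; auto.
    specialize (H i K ltac:(lia) ltac:(lia) Ei E). lia.
  - assert (sR K (fun k => if P k then 1 else 0) <= 1) by (apply IHK; intros; apply H; auto; lia). lra.
Qed.

Lemma ind_atmost1 (L K : nat) (w : Z) : (0 < L)%nat -> (K <= L)%nat ->
  sR K (fun k => indm L (w - Z.of_nat k)) <= 1.
Proof.
  intros HL HK. unfold indm. apply (sR_atmost1 K (fun k => ((w - Z.of_nat k) mod Z.of_nat L =? 0)%Z)).
  intros k1 k2 H1 H2 E1 E2. apply Z.eqb_eq in E1, E2.
  apply Z.mod_divide in E1; [|lia]. apply Z.mod_divide in E2; [|lia].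
  destruct E1 as [a Ha]. destruct E2 as [b Hb].
  assert (Z.of_nat k2 - Z.of_nat k1 = (a - b) * Z.of_nat L)%Z by lia.
  destruct (Z_le_gt_dec (a - b) 0); destruct (Z_le_gt_dec (a - b) (-1)); nia.
Qed.

Lemma ind_window (L : nat) (w : Z) : (0 < L)%nat ->
  sR L (fun k => indm L (w - Z.of_nat k)) = 1.
Proof.
  intros HL. apply Rle_antisym. apply ind_atmost1; lia.
  set (k0 := Z.to_nat (w mod Z.of_nat L)).
  assert (Hk0 : (k0 < L)%nat). { unfold k0. pose proof (Z.mod_pos_bound w (Z.of_nat L) ltac:(lia)). lia. }
  eapply Rle_trans. 2:{ apply (sR_term_le _ _ k0); auto. intros. apply ind_01. }
  unfold indm. replace ((w - Z.of_nat k0) mod Z.of_nat L =? 0)%Z with true. lra.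
  symmetry. apply Z.eqb_eq. unfold k0. rewrite Z2Nat.id.
  rewrite Zminus_mod, Z.mod_mod, Z.sub_diag by lia. apply Zmod_0_l.
  pose proof (Z.mod_pos_bound w (Z.of_nat L) ltac:(lia)). lia.
Qed.

Lemma count_window (L : nat) : (0 < L)%nat -> forall K (w : Z),
  INR K / INR L - 1 <= sR K (fun k => indm L (w - Z.of_nat k)) <= INR K / INR L + 1.
Proof.
  intros HL. assert (HLR : 0 < INR L) by (apply lt_0_INR; lia).
  intros K. induction K as [K IH] using lt_wf_ind. intros w.
  destruct (Nat.lt_ge_cases K L).
  - split.
    + assert (INR K / INR L <= 1) by (apply div_le1; auto; apply le_INR; lia).
      assert (0 <= sR K (fun k => indm L (w - Z.of_nat k))) by (apply sR_nonneg; intros; apply ind_01). lra.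
    + pose proof (ind_atmost1 L K w HL ltac:(lia)).
      assert (0 <= INR K / INR L) by (apply Rdiv_le_0_compat; auto; apply pos_INR). lra.
  - replace K with (L + (K - L))%nat by lia. rewrite sR_app, ind_window by auto.
    specialize (IH (K - L)%nat ltac:(lia) (w - Z.of_nat L)%Z).
    rewrite (sR_ext _ _ (fun k => indm L (w - Z.of_nat L - Z.of_nat k))).
    2:{ intros. f_equal. lia. }
    rewrite plus_INR, minus_INR by lia.
    replace ((INR L + (INR K - INR L)) / INR L) with (1 + (INR K - INR L) / INR L) by (field; lra).
    rewrite minus_INR in IH by lia. lra.
Qed.

Lemma split_p (p L : nat) (F : nat -> C) : (0 < p)%nat ->
  sC (p * L) F = (sC L (fun q => F (p * q)%nat) +
     sC (p * L) (fun h => if Nat.eqb (h mod p) 0 then RtoC 0 else F h))%C.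
Proof.
  intros Hp.
  rewrite (sC_ext (p*L) F (fun h => (if Nat.eqb (h mod p) 0 then F h else RtoC 0) +
                                   (if Nat.eqb (h mod p) 0 then RtoC 0 else F h))%C).
  2:{ intros. destruct (Nat.eqb _ _); ring. }
  rewrite sC_plus. f_equal. rewrite sC_split. apply sC_ext. intros q Hq.
  rewrite (sC_ext _ _ (fun r => if Nat.eqb 0 r then F (r + p * q)%nat else RtoC 0)).
  - rewrite (sC_delta p 0 (fun r => F (r + p * q)%nat)) by lia. auto.
  - intros r Hr. replace ((r + p * q) mod p)%nat with r.
    destruct (Nat.eqb_spec r 0); destruct (Nat.eqb_spec 0 r); auto; lia.
    rewrite Nat.mul_comm, Nat.Div0.mod_add, Nat.mod_small; auto.
Qed.

Lemma ind_split (p L : nat) (m : Z) : (0 < p)%nat -> (0 < L)%nat ->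
  RtoC (INR (p * L)%nat * indm (p * L)%nat m) = (RtoC (INR L * indm L m) +
     sC (p * L) (fun h => if Nat.eqb (h mod p) 0 then RtoC 0 else e (INR h * IZR m / INR (p * L)%nat)))%C.
Proof.
  intros Hp HL. rewrite ind_fourier by lia. rewrite split_p by auto. f_equal.
  rewrite ind_fourier by auto. apply sC_ext. intros q Hq. f_equal.
  rewrite !mult_INR. field. split; apply not_0_INR; lia.
Qed.

Lemma Cmod_RtoC x : Cmod (RtoC x) = Rabs x.
Proof. apply Cmod_R. Qed.

Lemma sR2_C N K (f : nat -> nat -> R) :
  sC N (fun i => sC K (fun k => RtoC (f i k))) = RtoC (sR N (fun i => sR K (f i))).
Proof. rewrite <- sC_RtoC. apply sC_ext. intros. apply sC_RtoC. Qed.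

Lemma fourier_count (p L N K : nat) (Y : nat -> Z) (c : Z) (B : R) :
  (2 <= p)%nat -> (1 <= L)%nat ->
  (forall h, (0 < h < p * L)%nat -> (h mod p <> 0)%nat ->
     Cmod (sC N (fun i => e (INR h * IZR (Y i) / INR (p * L)%nat))) <= B) ->
  Rabs (sR N (fun i => sR K (fun k => indm (p * L)%nat (Y i - c - Z.of_nat k)))
        - / INR p * sR N (fun i => sR K (fun k => indm L (Y i - c - Z.of_nat k))))
  <= 3 * B * (1 + ln (INR (p * L)%nat)).
Proof.
  intros Hp HL HB.
  set (M := (p * L)%nat) in *.
  assert (HM2 : (2 <= M)%nat) by (unfold M; nia).
  assert (HMR : 0 < INR M) by (apply lt_0_INR; lia).
  assert (HpR : 0 < INR p) by (apply lt_0_INR; lia).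
  assert (HLR : 0 < INR L) by (apply lt_0_INR; lia).
  assert (HMpL : INR M = INR p * INR L) by (unfold M; apply mult_INR).
  assert (HB0 : 0 <= B).
  { eapply Rle_trans. apply Cmod_ge_0. apply (HB 1%nat). lia. rewrite Nat.mod_small; lia. }
  set (G := sR N (fun i => sR K (fun k => indm M (Y i - c - Z.of_nat k)))).
  set (GL := sR N (fun i => sR K (fun k => indm L (Y i - c - Z.of_nat k)))).
  set (Rr := sC M (fun h => if Nat.eqb (h mod p) 0 then RtoC 0 else
        (sC N (fun i => e (INR h * IZR (Y i) / INR M)) *
         sC K (fun k => e (- INR h * (IZR c + INR k) / INR M)))%C)).
  assert (Hid : RtoC (INR M * G) = (RtoC (INR L * GL) + Rr)%C).
  { assert (E1 : INR M * G = sR N (fun i => sR K (fun k => INR M * indm M (Y i - c - Z.of_nat k)))).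
    { unfold G. rewrite sR_scal. apply sR_ext. intros. apply sR_scal. }
    assert (E2 : INR L * GL = sR N (fun i => sR K (fun k => INR L * indm L (Y i - c - Z.of_nat k)))).
    { unfold GL. rewrite sR_scal. apply sR_ext. intros. apply sR_scal. }
    rewrite E1, E2, <- !sR2_C.
    rewrite (sC_ext _ _ (fun i => sC K (fun k => RtoC (INR L * indm L (Y i - c - Z.of_nat k))) +
        sC K (fun k => sC M (fun h => if Nat.eqb (h mod p) 0 then RtoC 0 else
             e (INR h * IZR (Y i - c - Z.of_nat k) / INR M))))%C).
    2:{ intros i Hi. rewrite <- sC_plus. apply sC_ext. intros k Hk. apply ind_split; lia. }
    rewrite sC_plus. f_equal. unfold Rr.
    rewrite (sC_ext _ _ (fun i => sC M (fun h => sC K (fun k => if Nat.eqb (h mod p) 0 then RtoC 0 else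
             e (INR h * IZR (Y i - c - Z.of_nat k) / INR M))))).
    2:{ intros. apply sC_swap. }
    rewrite sC_swap. apply sC_ext. intros h Hh. destruct (Nat.eqb (h mod p) 0).
    - apply sC_zero. intros. apply sC_zero. auto.
    - rewrite sC_mult. apply sC_ext. intros i Hi. apply sC_ext. intros k Hk.
      rewrite <- e_add. f_equal. rewrite !minus_IZR, <- INR_IZR_INZ. field. lra. }
  assert (Hb : Cmod Rr <= 3 * B * INR M * Harm (M - 1)).
  { unfold Rr. eapply Rle_trans. apply Cmod_sC.
    apply (Rle_trans _ (sR M (fun h => if Nat.eqb h 0 then 0 else
             B * (3/2 * INR M * (1 / INR h + 1 / INR (M - h)))))).
    - apply sR_le. intros h Hh. destruct (Nat.eqb_spec (h mod p) 0) as [E|E].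
      + rewrite Cmod_0. destruct (Nat.eqb_spec h 0). lra.
        assert (0 < INR h) by (apply lt_0_INR; lia).
        assert (0 < INR (M - h)) by (apply lt_0_INR; lia).
        assert (0 < 1 / INR h) by (apply Rdiv_lt_0_compat; lra).
        assert (0 < 1 / INR (M - h)) by (apply Rdiv_lt_0_compat; lra). apply Rmult_le_pos; [lra|]. apply Rmult_le_pos; lra.
      + destruct (Nat.eqb_spec h 0). subst. rewrite Nat.Div0.mod_0_l in E. lia.
        rewrite Cmod_mult. apply Rmult_le_compat. apply Cmod_ge_0. apply Cmod_ge_0.
        apply HB; auto. lia. apply W_bound. lia.
    - replace M with (1 + (M - 1))%nat at 1 by lia. rewrite sR_app. simpl sR at 1.
      rewrite (sR_ext _ _ (fun i => 3/2 * B * INR M * (1 / INR (S i)) + 3/2 * B * INR M * (1 / INR (M - 1 - 1 - i + 1)))).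
      2:{ intros i Hi. simpl Nat.eqb. replace (M - (1 + i))%nat with (M - 1 - 1 - i + 1)%nat by lia.
          replace (1 + i)%nat with (S i) by lia. ring. }
      rewrite sR_plus, <- !sR_scal.
      assert (Hrev : sR (M - 1) (fun i => 1 / INR (M - 1 - 1 - i + 1)) = Harm (M - 1)).
      { unfold Harm. rewrite <- (sR_rev (M-1) (fun j => 1 / INR (S j))). apply sR_ext. intros.
        replace (M - 1 - 1 - i + 1)%nat with (S (M - 1 - 1 - i)) by lia. reflexivity. }
      rewrite Hrev. unfold Harm. lra. }
  assert (HMG : Rabs (INR M * G - INR L * GL) <= 3 * B * INR M * Harm (M - 1)).
  { rewrite <- Cmod_RtoC. replace (RtoC (INR M * G - INR L * GL)) with Rr. auto.
    rewrite RtoC_minus, Hid. ring. }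
  assert (HH : Harm (M - 1) <= 1 + ln (INR M)).
  { eapply Rle_trans. apply Harm_bound. lia. apply Rplus_le_compat_l. apply ln_le.
    apply lt_0_INR; lia. apply le_INR; lia. }
  replace (G - / INR p * GL) with ((INR M * G - INR L * GL) / INR M).
  2:{ rewrite HMpL. field. lra. }
  unfold Rdiv. rewrite Rabs_mult, (Rabs_right (/ INR M)).
  2:{ apply Rle_ge. apply Rlt_le. apply Rinv_0_lt_compat. lra. }
  apply (Rmult_le_reg_r (INR M)); auto. rewrite Rmult_assoc, Rinv_l by lra.
  rewrite Rmult_1_r. assert (0 <= 3 * B * INR M) by nra. assert (3 * B * INR M * Harm (M - 1) <= 3 * B * INR M * (1 + ln (INR M))) by (apply Rmult_le_compat_l; auto). nra.
Qed.

Lemma csum_sC n f : csum n f = sC n f.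
Proof. induction n; simpl; try reflexivity; rewrite IHn; reflexivity. Qed.
Lemma cpow_Cpow z k : cpow z k = Cpow z k.
Proof. induction k; simpl; try reflexivity; rewrite IHk; reflexivity. Qed.

Section Q.
Variable p : nat.
Variable xi : C.
Hypothesis Hp : (1 <= p)%nat.

Lemma Q1 j m : (m < p)%nat -> Qcoef p xi 1 j m = Cpow xi (j * m).
Proof.
  intros Hm. simpl Qcoef. rewrite csum_sC.
  rewrite (sC_ext _ _ (fun l => if Nat.eqb m l then Cpow xi (j * l) else RtoC 0)).
  - apply (sC_delta p m (fun l => Cpow xi (j * l))); auto.
  - intros l Hl. rewrite Nat.mul_1_r. change cmul with Cmult. change Defs.c0 with (RtoC 0).
    change Defs.c1 with (RtoC 1). rewrite cpow_Cpow.
    destruct (Nat.leb_spec l m); destruct (Nat.eqb_spec (m - l) 0); destruct (Nat.eqb_spec m l); subst; try lia; ring.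
Qed.

Lemma Q1z j m : (p <= m)%nat -> Qcoef p xi 1 j m = RtoC 0.
Proof.
  intros Hm. simpl Qcoef. rewrite csum_sC. apply sC_zero. intros l Hl.
  rewrite Nat.mul_1_r. destruct (Nat.leb_spec l m).
  - destruct (Nat.eqb_spec (m - l) 0); try lia. change cmul with Cmult. change Defs.c0 with (RtoC 0). ring.
  - change cmul with Cmult. change Defs.c0 with (RtoC 0). ring.
Qed.

Lemma Q2 j l0 l1 : (l0 < p)%nat -> (l1 < p)%nat ->
  Qcoef p xi 2 j (l0 + p * l1) = (Cpow xi (j * l1) * Cpow xi (l1 * l0))%C.
Proof.
  intros H0 H1. change (Qcoef p xi 2 j (l0 + p * l1)) with
    (csum p (fun l => cmul (cpow xi (j * l))
       (if Nat.leb (l * p ^ 1) (l0 + p * l1) then Qcoef p xi 1 l (l0 + p * l1 - l * p ^ 1) else c0))).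
  rewrite csum_sC. rewrite Nat.pow_1_r.
  rewrite (sC_ext _ _ (fun l => if Nat.eqb l1 l then (Cpow xi (j * l) * Cpow xi (l * l0))%C else RtoC 0)).
  - apply (sC_delta p l1 (fun l => (Cpow xi (j * l) * Cpow xi (l * l0))%C)); auto.
  - intros l Hl. change cmul with Cmult. change Defs.c0 with (RtoC 0). rewrite cpow_Cpow.
    destruct (Nat.eqb_spec l1 l).
    + subst. replace (Nat.leb (l * p) (l0 + p * l)) with true by (symmetry; apply Nat.leb_le; nia).
      replace (l0 + p * l - l * p)%nat with l0 by nia. rewrite Q1; auto.
    + destruct (Nat.leb_spec (l * p) (l0 + p * l1)).
      * rewrite Q1z. ring. assert (l < l1)%nat by nia. nia.
      * ring.
Qed.

Lemma Q2z j m : (p * p <= m)%nat -> Qcoef p xi 2 j m = RtoC 0.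
Proof.
  intros Hm. change (Qcoef p xi 2 j m) with
    (csum p (fun l => cmul (cpow xi (j * l))
       (if Nat.leb (l * p ^ 1) m then Qcoef p xi 1 l (m - l * p ^ 1) else c0))).
  rewrite csum_sC, Nat.pow_1_r. apply sC_zero. intros l Hl.
  change cmul with Cmult. change Defs.c0 with (RtoC 0).
  destruct (Nat.leb_spec (l * p) m).
  - rewrite Q1z. ring. nia.
  - ring.
Qed.

Lemma Q3 l0 l1 l2 : (l0 < p)%nat -> (l1 < p)%nat -> (l2 < p)%nat ->
  Qcoef p xi 3 0 (l0 + p * (l1 + p * l2)) = (Cpow xi (l2 * l1) * Cpow xi (l1 * l0))%C.
Proof.
  intros H0 H1 H2. change (Qcoef p xi 3 0 (l0 + p * (l1 + p * l2))) with
    (csum p (fun l => cmul (cpow xi (0 * l))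
       (if Nat.leb (l * p ^ 2) (l0 + p * (l1 + p * l2)) then Qcoef p xi 2 l (l0 + p * (l1 + p * l2) - l * p ^ 2) else c0))).
  rewrite csum_sC. replace (p ^ 2)%nat with (p * p)%nat by (simpl; lia).
  rewrite (sC_ext _ _ (fun l => if Nat.eqb l2 l then (Cpow xi (l * l1) * Cpow xi (l1 * l0))%C else RtoC 0)).
  - apply (sC_delta p l2 (fun l => (Cpow xi (l * l1) * Cpow xi (l1 * l0))%C)); auto.
  - intros l Hl. change cmul with Cmult. change Defs.c0 with (RtoC 0). rewrite cpow_Cpow. simpl (0 * l)%nat.
    destruct (Nat.eqb_spec l2 l).
    + subst. replace (Nat.leb (l * (p * p)) (l0 + p * (l1 + p * l))) with true by (symmetry; apply Nat.leb_le; nia).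
      replace (l0 + p * (l1 + p * l) - l * (p * p))%nat with (l0 + p * l1)%nat by nia. rewrite Q2; auto.
      simpl. ring.
    + destruct (Nat.leb_spec (l * (p * p)) (l0 + p * (l1 + p * l2))).
      * rewrite Q2z. ring. assert (l < l2)%nat by nia. nia.
      * ring.
Qed.
End Q.

Lemma Int_part_IZR z : Int_part (IZR z) = z.
Proof.
  destruct (base_Int_part (IZR z)) as [H1 H2].
  apply le_IZR in H1. assert (IZR z < IZR (Int_part (IZR z) + 1)) by (rewrite plus_IZR; lra).
  apply lt_IZR in H. lia.
Qed.

Lemma Int_part_shift (q : Z) f : 0 <= f < 1 -> Int_part (IZR q + f) = q.
Proof.
  intros Hf. destruct (base_Int_part (IZR q + f)) as [H1 H2].
  assert (IZR (Int_part (IZR q + f)) < IZR (q + 1)) by (rewrite plus_IZR; lra).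
  assert (IZR q < IZR (Int_part (IZR q + f) + 1)) by (rewrite plus_IZR; lra).
  apply lt_IZR in H. apply lt_IZR in H0. lia.
Qed.

Lemma digits p i : (1 <= p)%nat -> (i < p ^ 3)%nat ->
  exists l0 l1 l2, (l0 < p)%nat /\ (l1 < p)%nat /\ (l2 < p)%nat /\ i = (l0 + p * (l1 + p * l2))%nat.
Proof.
  intros Hp Hi. replace (p ^ 3)%nat with (p * (p * p))%nat in Hi by (simpl; lia).
  pose proof (Nat.div_mod_eq i p) as E1. pose proof (Nat.mod_upper_bound i p ltac:(lia)) as B1.
  set (q := (i / p)%nat) in *.
  pose proof (Nat.div_mod_eq q p) as E2. pose proof (Nat.mod_upper_bound q p ltac:(lia)) as B2.
  set (q2 := (q / p)%nat) in *.
  exists (i mod p)%nat, (q mod p)%nat, q2. repeat split; auto.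
  - assert (q < p * p)%nat by nia. nia.
  - nia.
Qed.

Definition cnd (r : nat -> R) (a b : R) (i : nat) : R :=
  if Rle_dec a (fracR (r i)) then if Rle_dec (fracR (r i)) b then 1 else 0 else 0.

Lemma count_sR r N a b : INR (count_in r N a b) = sR N (cnd r a b).
Proof.
  unfold count_in. induction N. reflexivity.
  rewrite seq_S, filter_app, length_app, plus_INR, IHN. simpl sR. f_equal.
  unfold cnd. simpl. destruct (Rle_dec a (fracR (r N))); destruct (Rle_dec (fracR (r N)) b); simpl; lra.
Qed.

Section Main.
Variable p : nat.
Variable xi : C.
Variable s : nat -> R.
Hypothesis Hp : prime (Z.of_nat p).
Hypothesis Hprim : primitive_root p xi.
Hypothesis Hs : forall j : nat, (j < p ^ 3)%nat -> 0 <= s j < 1 /\ Qcoef p xi 3 0 j = cexp2pi (s j).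

Lemma p2 : (2 <= p)%nat.
Proof. apply prime_ge2; auto. Qed.

Lemma K1 l0 l1 l2 : (l0 < p)%nat -> (l1 < p)%nat -> (l2 < p)%nat ->
  e (s (l0 + p * (l1 + p * l2))%nat) = (Cpow xi (l2 * l1) * Cpow xi (l1 * l0))%C.
Proof.
  intros H0 H1 H2. pose proof p2.
  destruct (Hs (l0 + p * (l1 + p * l2))%nat) as [_ Hq].
  - replace (p ^ 3)%nat with (p * (p * p))%nat by (simpl; lia). nia.
  - rewrite Q3 in Hq by (auto; lia). rewrite Hq. reflexivity.
Qed.

Definition theta := s (1 + p * (1 + p * 0))%nat.

Lemma K2 : xi = e theta.
Proof.
  pose proof p2. unfold theta. rewrite K1 by lia. simpl. ring.
Qed.

Lemma K3 : exists alpha : Z, INR p * theta = IZR alpha /\ (0 < alpha < Z.of_nat p)%Z.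
Proof.
  pose proof p2. destruct Hprim as [Hx Hk].
  rewrite cpow_Cpow, K2, e_pow in Hx. apply e_eq1 in Hx. destruct Hx as [al Hal].
  exists al. split; auto.
  assert (Ht : 0 <= theta < 1). { unfold theta. apply Hs. replace (p ^ 3)%nat with (p * (p * p))%nat by (simpl; lia). nia. }
  assert (HpR : 1 < INR p) by (apply lt_1_INR; lia).
  assert (0 <= IZR al) by nra. assert (IZR al < IZR (Z.of_nat p)) by (rewrite <- INR_IZR_INZ; nra).
  apply le_IZR in H0. apply lt_IZR in H1.
  destruct (Z.eq_dec al 0).
  - exfalso. subst. assert (theta = 0) by nra. apply (Hk 1%nat). lia.
    rewrite cpow_Cpow, Cpow_1_r, K2, H2, e_0. reflexivity.
  - lia.
Qed.

Variable alpha : Z.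
Hypothesis Hal : INR p * theta = IZR alpha.
Hypothesis Hal2 : (0 < alpha < Z.of_nat p)%Z.

Lemma K4 l0 l1 l2 : (l0 < p)%nat -> (l1 < p)%nat -> (l2 < p)%nat ->
  exists n : Z, s (l0 + p * (l1 + p * l2))%nat = IZR n + IZR alpha * INR l1 * INR (l0 + l2) / INR p.
Proof.
  intros H0 H1 H2. pose proof p2 as Hp2.
  assert (HpR : 0 < INR p) by (apply lt_0_INR; lia).
  assert (Ht : theta = IZR alpha / INR p) by (rewrite <- Hal; field; lra).
  set (A := IZR alpha * INR l1 * INR (l0 + l2) / INR p).
  assert (HA : e (s (l0 + p * (l1 + p * l2))%nat) = e A).
  { rewrite K1 by auto. rewrite K2, !e_pow, <- e_add. f_equal. unfold A. rewrite Ht, !mult_INR, plus_INR. field. lra. }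
  destruct (e_eq1 (s (l0 + p * (l1 + p * l2))%nat - A)) as [n Hn].
  { unfold Rminus. rewrite e_add, e_opp, HA. apply e_mul_conj. }
  exists n. lra.
Qed.

Lemma K5 i : (i < p ^ 3)%nat -> exists z : Z, INR p * s i = IZR z.
Proof.
  intros Hi. pose proof p2 as Hp2. assert (HpR : 0 < INR p) by (apply lt_0_INR; lia).
  destruct (digits p i ltac:(lia) Hi) as (l0 & l1 & l2 & H0 & H1 & H2 & ->).
  destruct (K4 l0 l1 l2 H0 H1 H2) as [n Hn]. rewrite Hn.
  exists (Z.of_nat p * n + alpha * Z.of_nat l1 * Z.of_nat (l0 + l2))%Z.
  rewrite plus_IZR, !mult_IZR, <- !INR_IZR_INZ. field. lra.
Qed.

Variable t : R.
Definition NN := (p ^ 3)%nat.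
Definition LL := (NN * NN)%nat.
Definition MM := (p * LL)%nat.
Definition TT := Int_part (INR LL * t).
Definition tau := IZR TT / INR LL.
Definition Y i := Int_part (INR MM * (s i + INR i * tau)).

Lemma NN_pos : (8 <= NN)%nat.
Proof. pose proof p2. unfold NN. replace (p ^ 3)%nat with (p * (p * p))%nat by (simpl; lia). nia. Qed.
Lemma LL_pos : (1 <= LL)%nat.
Proof. pose proof NN_pos. unfold LL. nia. Qed.

Lemma Y1 i : (i < NN)%nat -> IZR (Y i) = INR MM * (s i + INR i * tau).
Proof.
  intros Hi. destruct (K5 i Hi) as [z Hz]. pose proof LL_pos. pose proof p2.
  assert (0 < INR LL) by (apply lt_0_INR; lia).
  assert (HpR : 0 < INR p) by (apply lt_0_INR; lia).
  assert (E : INR MM * (s i + INR i * tau) = IZR (Z.of_nat LL * z + Z.of_nat i * TT * Z.of_nat p)).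
  { rewrite plus_IZR, !mult_IZR, <- !INR_IZR_INZ, <- Hz. unfold MM, tau. rewrite mult_INR. field. lra. }
  unfold Y. rewrite E, Int_part_IZR. auto.
Qed.

Lemma Bbound h : (0 < h < MM)%nat -> (h mod p <> 0)%nat ->
  Cmod (sC NN (fun i => e (INR h * IZR (Y i) / INR MM))) <= INR p ^ 2.
Proof.
  intros Hh Hhp. pose proof p2. pose proof LL_pos.
  assert (HMR : 0 < INR MM) by (apply lt_0_INR; unfold MM; nia).
  assert (HpR : 0 < INR p) by (apply lt_0_INR; lia).
  unfold NN. replace (p ^ 3)%nat with (p * (p * p))%nat by (simpl; lia).
  rewrite sC_split, sC_split.
  rewrite (sC_ext _ _ (fun l2 => sC p (fun l1 => sC p (fun l0 =>
     e (IZR (Z.of_nat h) * (IZR alpha * INR l1 * INR (l0 + l2) / INR p + INR (l0 + p * (l1 + p * l2)) * tau)))))).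
  - apply S_bound3; auto.
    + intros [k Hk]. destruct (Z_le_gt_dec k 0); nia.
    + intros [k Hk]. apply Hhp. apply Nat2Z.inj. rewrite Nat2Z.inj_mod, Hk, Z_mod_mult. auto.
  - intros l2 Hl2. apply sC_ext. intros l1 Hl1. apply sC_ext. intros l0 Hl0.
    rewrite Y1.
    2:{ unfold NN. replace (p ^ 3)%nat with (p * (p * p))%nat by (simpl; lia). nia. }
    destruct (K4 l0 l1 l2 Hl0 Hl1 Hl2) as [n Hn].
    replace (l0 + p * (l1 + p * l2))%nat with (l0 + p * (l1 + p * l2))%nat by auto.
    rewrite Hn.
    replace (INR h * (INR MM * (IZR n + IZR alpha * INR l1 * INR (l0 + l2) / INR p + INR (l0 + p * (l1 + p * l2)) * tau)) / INR MM)
      with (IZR (Z.of_nat h * n) + IZR (Z.of_nat h) * (IZR alpha * INR l1 * INR (l0 + l2) / INR p + INR (l0 + p * (l1 + p * l2)) * tau)).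
    + rewrite e_add, e_IZR. ring.
    + rewrite mult_IZR, <- !INR_IZR_INZ. field. lra.
Qed.

Definition r i := s i + INR i * t.

Lemma tau_prop : tau <= t < tau + 1 / INR LL.
Proof.
  pose proof LL_pos. assert (0 < INR LL) by (apply lt_0_INR; lia).
  destruct (base_Int_part (INR LL * t)) as [H1 H2]. unfold tau, TT.
  split.
  - apply (Rmult_le_reg_l (INR LL)); auto. replace (INR LL * (IZR (Int_part (INR LL * t)) / INR LL)) with (IZR (Int_part (INR LL * t))) by (field; lra). lra.
  - apply (Rmult_lt_reg_l (INR LL)); auto. replace (INR LL * (IZR (Int_part (INR LL * t)) / INR LL + 1 / INR LL)) with (IZR (Int_part (INR LL * t)) + 1) by (field; lra). lra.
Qed.

Definition PN := (INR p * INR NN).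

Lemma d_prop i : (i < NN)%nat -> 0 <= INR MM * (r i - IZR (Y i) / INR MM) <= PN.
Proof.
  intros Hi. pose proof LL_pos. pose proof p2. pose proof tau_prop.
  assert (0 < INR LL) by (apply lt_0_INR; lia).
  assert (HMR : INR MM = INR p * INR LL) by (unfold MM; apply mult_INR).
  assert (0 < INR p) by (apply lt_0_INR; lia). assert (0 < INR MM) by (rewrite HMR; nra).
  rewrite Y1 by auto. unfold r.
  replace (INR MM * (s i + INR i * t - INR MM * (s i + INR i * tau) / INR MM)) with (INR MM * INR i * (t - tau)) by (field; lra).
  assert (INR i <= INR NN) by (apply le_INR; lia). pose proof (pos_INR i).
  split. apply Rmult_le_pos. nra. lra.
  unfold PN. rewrite HMR.
  assert ((t - tau) * INR LL <= 1).
  { destruct tau_prop as [Ta Tb]. assert (Tc : t - tau < 1 / INR LL) by lra.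
    assert (Td : (t - tau) * INR LL < 1 / INR LL * INR LL) by (apply Rmult_lt_compat_r; lra).
    replace (1 / INR LL * INR LL) with 1 in Td by (field; lra). lra. }
  assert (0 <= t - tau) by lra. assert (INR i * ((t - tau) * INR LL) <= INR i * 1) by (apply Rmult_le_compat_l; lra). assert (INR p * (INR i * ((t - tau) * INR LL)) <= INR p * INR NN) by (apply Rmult_le_compat_l; lra). nra.
Qed.

Lemma fracR_eq (q : Z) f x : x = IZR q + f -> 0 <= f < 1 -> fracR x = f.
Proof. intros -> Hf. unfold fracR. rewrite Int_part_shift; auto. ring. Qed.

Lemma PN_IZR : PN = IZR (Z.of_nat (p * NN)).
Proof. unfold PN. rewrite <- INR_IZR_INZ, mult_INR. auto. Qed.

Lemma MM_pos : 0 < INR MM.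
Proof. pose proof p2. pose proof LL_pos. apply lt_0_INR. unfold MM. nia. Qed.

Definition cup a := (Int_part (INR MM * a) - Z.of_nat (p * NN))%Z.
Definition Kup a b := (Int_part (INR MM * b) - Int_part (INR MM * a) + Z.of_nat (p * NN) + 1)%Z.

Lemma upper_cnd a b i : 0 <= a -> a <= b -> b <= 1 -> (i < NN)%nat ->
  cnd r a b i <= sR (Z.to_nat (Kup a b)) (fun k => indm MM (Y i - cup a - Z.of_nat k)).
Proof.
  intros Ha Hab Hb Hi. pose proof MM_pos as HM.
  assert (Hnn : 0 <= sR (Z.to_nat (Kup a b)) (fun k => indm MM (Y i - cup a - Z.of_nat k)))
    by (apply sR_nonneg; intros; apply ind_01).
  unfold cnd. destruct (Rle_dec a (fracR (r i))) as [H1|H1]; [|lra].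
  destruct (Rle_dec (fracR (r i)) b) as [H2|H2]; [|lra].
  set (q := Int_part (r i)). set (z := (Y i - Z.of_nat MM * q)%Z).
  pose proof (d_prop i Hi) as Hd. set (D := INR MM * (r i - IZR (Y i) / INR MM)) in *.
  assert (Hz : IZR z = INR MM * fracR (r i) - D).
  { unfold z, D, fracR. rewrite minus_IZR, mult_IZR, <- INR_IZR_INZ. fold q. field. lra. }
  destruct (base_Int_part (INR MM * a)) as [Ia1 Ia2].
  destruct (base_Int_part (INR MM * b)) as [Ib1 Ib2].
  assert (Hz1 : (cup a <= z)%Z).
  { apply le_IZR. unfold cup. rewrite minus_IZR, <- PN_IZR.
    assert (INR MM * a <= INR MM * fracR (r i)) by (apply Rmult_le_compat_l; lra). lra. }
  assert (Hz2 : (z <= Int_part (INR MM * b))%Z).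
  { assert (IZR z < IZR (Int_part (INR MM * b) + 1)).
    { rewrite plus_IZR. assert (INR MM * fracR (r i) <= INR MM * b) by (apply Rmult_le_compat_l; lra). lra. }
    apply lt_IZR in H. lia. }
  eapply Rle_trans. 2:{ apply (sR_term_le _ _ (Z.to_nat (z - cup a))). intros; apply ind_01.
    unfold Kup. unfold cup in *. lia. }
  unfold indm. replace ((Y i - cup a - Z.of_nat (Z.to_nat (z - cup a))) mod Z.of_nat MM =? 0)%Z with true. lra.
  symmetry. apply Z.eqb_eq. rewrite Z2Nat.id by lia.
  replace (Y i - cup a - (z - cup a))%Z with (q * Z.of_nat MM)%Z by (unfold z; ring).
  apply Z_mod_mult.
Qed.

Definition clo a := (Int_part (INR MM * a) + 1)%Z.
Definition Klo a b := (Int_part (INR MM * b) - Int_part (INR MM * a) - Z.of_nat (p * NN) - 1)%Z.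

Lemma lower_hit a b i k : 0 <= a -> a <= b -> b <= 1 -> (i < NN)%nat -> (k < Z.to_nat (Klo a b))%nat ->
  indm MM (Y i - clo a - Z.of_nat k) = 1 -> a <= fracR (r i) <= b.
Proof.
  intros Ha Hab Hb Hi Hk Hind. pose proof MM_pos as HM.
  unfold indm in Hind. destruct (Z.eqb_spec ((Y i - clo a - Z.of_nat k) mod Z.of_nat MM) 0) as [E|E]; [|lra].
  apply Z.mod_divide in E. 2:{ pose proof p2. pose proof LL_pos. unfold MM. nia. }
  destruct E as [q Hq].
  set (z := (clo a + Z.of_nat k)%Z).
  pose proof (d_prop i Hi) as Hd. set (D := INR MM * (r i - IZR (Y i) / INR MM)) in *.
  destruct (base_Int_part (INR MM * a)) as [Ia1 Ia2].
  destruct (base_Int_part (INR MM * b)) as [Ib1 Ib2].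
  assert (Hk2 : (Z.of_nat k < Klo a b)%Z) by lia.
  assert (Hz1 : IZR z > INR MM * a).
  { unfold z, clo. rewrite !plus_IZR. pose proof (pos_INR k). rewrite INR_IZR_INZ in H. lra. }
  assert (Hz2 : IZR z + D <= INR MM * b - 1).
  { assert (IZR z <= IZR (Int_part (INR MM * b)) - PN - 1).
    { rewrite PN_IZR. rewrite <- !minus_IZR. apply IZR_le. unfold z, clo, Klo in *. lia. }
    lra. }
  assert (Hr : r i = IZR q + (IZR z / INR MM + D / INR MM)).
  { unfold D. assert (IZR (Y i) = IZR q * INR MM + IZR z).
    { rewrite INR_IZR_INZ, <- mult_IZR, <- plus_IZR. f_equal. unfold z. lia. }
    rewrite H. field. lra. }
  assert (Hf1 : a < IZR z / INR MM + D / INR MM).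
  { apply (Rmult_lt_reg_l (INR MM)); auto. replace (INR MM * (IZR z / INR MM + D / INR MM)) with (IZR z + D) by (field; lra). lra. }
  assert (Hf2 : IZR z / INR MM + D / INR MM < b).
  { apply (Rmult_lt_reg_l (INR MM)); auto. replace (INR MM * (IZR z / INR MM + D / INR MM)) with (IZR z + D) by (field; lra). lra. }
  rewrite (fracR_eq q _ _ Hr) by lra. lra.
Qed.

Lemma lower_cnd a b i : 0 <= a -> a <= b -> b <= 1 -> (i < NN)%nat ->
  sR (Z.to_nat (Klo a b)) (fun k => indm MM (Y i - clo a - Z.of_nat k)) <= cnd r a b i.
Proof.
  intros Ha Hab Hb Hi. pose proof MM_pos as HM.
  assert (HK : (Z.to_nat (Klo a b) <= MM)%nat).
  { destruct (base_Int_part (INR MM * a)) as [Ia1 Ia2].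
    destruct (base_Int_part (INR MM * b)) as [Ib1 Ib2].
    assert (IZR (Klo a b) <= IZR (Z.of_nat MM)).
    { unfold Klo. rewrite !minus_IZR, <- PN_IZR, <- INR_IZR_INZ.
      assert (0 <= PN) by (unfold PN; pose proof (pos_INR p); pose proof (pos_INR NN); nra).
      assert (INR MM * b <= INR MM * 1) by (apply Rmult_le_compat_l; lra).
      assert (INR MM * 0 <= INR MM * a) by (apply Rmult_le_compat_l; lra). lra. }
    apply le_IZR in H. lia. }
  unfold cnd. destruct (Rle_dec a (fracR (r i))) as [H1|H1].
  destruct (Rle_dec (fracR (r i)) b) as [H2|H2].
  - apply ind_atmost1; auto. pose proof p2. pose proof LL_pos. unfold MM. nia.
  - right. apply sR_zero. intros k Hk. pose proof (ind_01 MM (Y i - clo a - Z.of_nat k)).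
    unfold indm in *. destruct (_ =? 0)%Z eqn:E; auto.
    exfalso. apply H2. apply (lower_hit a b i k); auto. unfold indm. rewrite E. auto.
  - right. apply sR_zero. intros k Hk. pose proof (ind_01 MM (Y i - clo a - Z.of_nat k)).
    unfold indm in *. destruct (_ =? 0)%Z eqn:E; auto.
    exfalso. apply H1. apply (lower_hit a b i k); auto. unfold indm. rewrite E. auto.
Qed.

Lemma final_bound a b : 0 <= a -> a <= b -> b <= 1 ->
  Rabs (INR (count_in r NN a b) - INR NN * (b - a))
  <= 2 + INR NN / INR p + 3 * INR p ^ 2 * (1 + ln (INR MM)).
Proof.
  intros Ha Hab Hb. rewrite count_sR.
  pose proof p2 as Hp2. pose proof LL_pos as HL1. pose proof NN_pos as HN8. pose proof MM_pos as HM.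
  assert (HPR : 2 <= INR p). { assert (INR 2 <= INR p) by (apply le_INR; lia). simpl in H. lra. }
  assert (HNR : 8 <= INR NN). { assert (INR 8 <= INR NN) by (apply le_INR; lia). simpl in H. lra. }
  assert (HLR : INR LL = INR NN * INR NN) by (unfold LL; apply mult_INR).
  assert (HMR : INR MM = INR p * INR LL) by (unfold MM; apply mult_INR).
  assert (HL0 : 0 < INR LL) by (rewrite HLR; nra).
  set (B := INR p ^ 2).
  set (E := 3 * B * (1 + ln (INR MM))).
  assert (HB : forall h, (0 < h < p * LL)%nat -> (h mod p <> 0)%nat ->
     Cmod (sC NN (fun i => e (INR h * IZR (Y i) / INR (p * LL)%nat))) <= B).
  { intros. apply Bbound; auto. }
  assert (Hc : INR NN / INR MM * (PN + 2) <= 2).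
  { unfold PN. rewrite HMR, HLR. replace (INR NN / (INR p * (INR NN * INR NN)) * (INR p * INR NN + 2))
      with (1 + 2 / (INR p * INR NN)) by (field; lra).
    assert (2 / (INR p * INR NN) <= 1). { apply div_le1. nra. nra. } lra. }
  assert (Hc0 : 0 < INR NN / INR MM) by (apply Rdiv_lt_0_compat; lra).
  destruct (base_Int_part (INR MM * a)) as [Ia1 Ia2].
  destruct (base_Int_part (INR MM * b)) as [Ib1 Ib2].
  assert (Hab' : INR MM * a <= INR MM * b) by (apply Rmult_le_compat_l; lra).
  assert (HPN : PN = IZR (Z.of_nat (p * NN))) by apply PN_IZR.
  apply Rabs_le. split.
  -
    set (K := Z.to_nat (Klo a b)).
    set (Gl := sR NN (fun i => sR K (fun k => indm MM (Y i - clo a - Z.of_nat k)))).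
    set (GLl := sR NN (fun i => sR K (fun k => indm LL (Y i - clo a - Z.of_nat k)))).
    assert (H1 : Gl <= sR NN (cnd r a b)) by (apply sR_le; intros; apply lower_cnd; auto).
    pose proof (fourier_count p LL NN K Y (clo a) B Hp2 HL1 HB) as FC. fold MM Gl GLl E in FC.
    apply Rabs_le_between in FC.
    assert (H2 : INR NN * (INR K / INR LL - 1) <= GLl).
    { rewrite <- sR_const. apply sR_le. intros i Hi. apply count_window. lia. }
    assert (H3 : IZR (Klo a b) <= INR K).
    { unfold K. destruct (Z_le_gt_dec 0 (Klo a b)).
      rewrite INR_IZR_INZ, Z2Nat.id; [lra|lia]. pose proof (pos_INR (Z.to_nat (Klo a b))). assert (Klo a b < 0)%Z as g2 by lia. apply IZR_lt in g2. lra. }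
    assert (H4 : INR MM * (b - a) - PN - 2 <= IZR (Klo a b)).
    { unfold Klo. rewrite !minus_IZR, <- HPN. lra. }
    assert (H5 : / INR p * GLl >= INR NN / INR MM * INR K - INR NN / INR p).
    { assert (/ INR p * (INR NN * (INR K / INR LL - 1)) = INR NN / INR MM * INR K - INR NN / INR p)
        by (rewrite HMR; field; lra).
      assert (0 < / INR p) by (apply Rinv_0_lt_compat; lra). nra. }
    assert (H6 : INR NN / INR MM * (INR MM * (b - a) - PN - 2) <= INR NN / INR MM * INR K)
      by (apply Rmult_le_compat_l; lra).
    replace (INR NN / INR MM * (INR MM * (b - a) - PN - 2)) with (INR NN * (b - a) - INR NN / INR MM * (PN + 2)) in H6
      by (field; lra).
    lra.
  -
    set (K := Z.to_nat (Kup a b)).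
    set (Gu := sR NN (fun i => sR K (fun k => indm MM (Y i - cup a - Z.of_nat k)))).
    set (GLu := sR NN (fun i => sR K (fun k => indm LL (Y i - cup a - Z.of_nat k)))).
    assert (H1 : sR NN (cnd r a b) <= Gu) by (apply sR_le; intros; apply upper_cnd; auto).
    pose proof (fourier_count p LL NN K Y (cup a) B Hp2 HL1 HB) as FC. fold MM Gu GLu E in FC.
    apply Rabs_le_between in FC.
    assert (H2 : GLu <= INR NN * (INR K / INR LL + 1)).
    { rewrite <- sR_const. apply sR_le. intros i Hi. apply count_window. lia. }
    assert (Hk0 : (0 <= Kup a b)%Z).
    { unfold Kup. assert (Int_part (INR MM * a) <= Int_part (INR MM * b))%Z.
      { assert (IZR (Int_part (INR MM * a)) < IZR (Int_part (INR MM * b) + 1)) by (rewrite plus_IZR; lra).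
        apply lt_IZR in H. lia. }
      lia. }
    assert (H3 : INR K = IZR (Kup a b)).
    { unfold K. rewrite INR_IZR_INZ, Z2Nat.id; auto. }
    assert (H4 : IZR (Kup a b) <= INR MM * (b - a) + PN + 2).
    { unfold Kup. rewrite !plus_IZR, minus_IZR, <- HPN. lra. }
    assert (H5 : / INR p * GLu <= INR NN / INR MM * INR K + INR NN / INR p).
    { assert (/ INR p * (INR NN * (INR K / INR LL + 1)) = INR NN / INR MM * INR K + INR NN / INR p)
        by (rewrite HMR; field; lra).
      assert (0 < / INR p) by (apply Rinv_0_lt_compat; lra). nra. }
    assert (H6 : INR NN / INR MM * INR K <= INR NN / INR MM * (INR MM * (b - a) + PN + 2))
      by (apply Rmult_le_compat_l; lra).
    replace (INR NN / INR MM * (INR MM * (b - a) + PN + 2)) with (INR NN * (b - a) + INR NN / INR MM * (PN + 2)) in H6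
      by (field; lra).
    lra.
Qed.

End Main.

Theorem corollary4p4 :
  exists C : R, 0 < C /\
  forall (p : nat) (xi : cpx),
    prime (Z.of_nat p) -> primitive_root p xi ->
    forall s : nat -> R,
      (forall j : nat, (j < p ^ 3)%nat ->
         0 <= s j < 1 /\ Qcoef p xi 3 0 j = cexp2pi (s j)) ->
      forall t : R,
        bias_le (fun i => s i + INR i * t) (p ^ 3)
          (C * Rpower (INR (p ^ 3)) (2 / 3) * ln (INR (p ^ 3))).
Proof.
  exists 10. split. lra.
  intros p xi Hp Hprim s Hs t a b Ha Hab Hb.
  destruct (K3 p xi s Hp Hprim Hs) as [alpha [Hal Hal2]].
  pose proof (final_bound p xi s Hp Hs alpha Hal Hal2 t a b Ha Hab Hb) as H.
  unfold r, NN, MM, LL, NN in H.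
  pose proof (p2 p Hp) as Hp2.
  assert (HPR : 2 <= INR p). { assert (INR 2 <= INR p) by (apply le_INR; lia). simpl in H0. lra. }
  assert (E3 : INR (p ^ 3) = INR p ^ 3) by apply pow_INR.
  assert (E7 : INR (p * (p ^ 3 * p ^ 3)) = INR p ^ 7) by (rewrite !mult_INR, E3; ring).
  rewrite E7, E3 in H. rewrite E3.
  assert (Hln2 : / 2 < ln (INR p)).
  { eapply Rlt_le_trans. apply ln_lt_2. apply ln_le; lra. }
  rewrite !ln_pow in H by lra. rewrite ln_pow by lra.
  assert (Hrp : Rpower (INR p ^ 3) (2 / 3) = INR p ^ 2).
  { rewrite <- Rpower_pow by lra. rewrite Rpower_mult. rewrite <- Rpower_pow by lra. f_equal. simpl. field. }
  rewrite Hrp.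
  replace (INR p ^ 3 / INR p) with (INR p ^ 2) in H by (field; lra).
  simpl INR in H |- *.
  assert (Hp4 : 4 <= INR p ^ 2) by nra.
  eapply Rle_trans. apply H.
  assert (INR p ^ 2 * (/2) <= INR p ^ 2 * ln (INR p)) by (apply Rmult_le_compat_l; lra).
  nra.
Qed.
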